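(* Let $G_1=(V,E_1,L)$ and $G_2=(V,E_2,L)$ be hypergraphs with loops with the same node set and the same loops (with the same signs), and with $E_1\subseteq E_2$. Then a formulation for $\mathrm{PP}(G_2)$ is an extended formulation for $\mathrm{PP}(G_1)$; that is, $\mathrm{PP}(G_1)$ equals the projection of $\mathrm{PP}(G_2)$ onto the coordinates indexed by $V\cup E_1\cup L$.
   Context: A hypergraph with loops is $G=(V,E,L)$: $V$ a finite node set, $E$ a set of subsets of $V$ of cardinality at least two, $L$ a set of loops $\{i,i\}$, $i\in V$, partitioned as $L=L^-\cup L^+$ (minus/plus loops). $\mathrm{PP}(G):=\mathrm{conv}\{z\in\mathbb{R}^{V\cup E\cup L}: z_{ii}\ge z_i^2\ \forall\{i,i\}\in L^+,\ z_{ii}\le z_i^2\ \forall \{i,i\}\in L^-,\ z_e=\prod_{i\in e}z_i\ \forall e\in E,\ z_i\in[0,1]\ \forall i\in V\}$. *)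

(* Defs.v *)
From HB Require Import structures.
From mathcomp Require Import all_boot all_order all_algebra.
From mathcomp Require Import reals.
Set Implicit Arguments. Unset Strict Implicit. Unset Printing Implicit Defensive.
Import Order.TTheory GRing.Theory Num.Theory.
Local Open Scope ring_scope.

(* A hypergraph with loops on node set V (a finite type):
   E : {set {set V}} the hyperedges (each of cardinality >= 2),
   Lm, Lp : {set V} the nodes carrying a minus / plus loop (disjoint);
   L = Lm :|: Lp is the set of loops, loop {i,i} identified with node i. *)
Definition hyperedges_ok (V : finType) (E : {set {set V}}) : Prop :=
  forall e, e \in E -> (2 <= #|e|)%N.

Definition hcoord (V : finType) (E : {set {set V}}) (L : {set V}) : Type :=
  (V + ({e : {set V} | e \in E} + {i : V | i \in L}))%type.

Definition cnode {V : finType} {E : {set {set V}}} {L : {set V}} (i : V)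
  : hcoord E L := inl i.
Definition cedge {V : finType} {E : {set {set V}}} {L : {set V}}
  (e : {e : {set V} | e \in E}) : hcoord E L := inr (inl e).
Definition cloop {V : finType} {E : {set {set V}}} {L : {set V}}
  (i : {i : V | i \in L}) : hcoord E L := inr (inr i).

Definition conv (R : realType) (I : Type) (S : (I -> R) -> Prop) (z : I -> R)
  : Prop :=
  exists (n : nat) (lam : 'I_n -> R) (x : 'I_n -> I -> R),
    (forall k, 0 <= lam k) /\ \sum_(k < n) lam k = 1 /\
    (forall k, S (x k)) /\ (forall c, z c = \sum_(k < n) lam k * x k c).

Definition PPset (R : realType) (V : finType) (E : {set {set V}})
  (Lm Lp : {set V}) (z : hcoord E (Lm :|: Lp) -> R) : Prop :=
  (forall l : {i : V | i \in Lm :|: Lp},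
      val l \in Lp -> z (cloop l) >= z (cnode (val l)) ^+ 2) /\
  (forall l : {i : V | i \in Lm :|: Lp},
      val l \in Lm -> z (cloop l) <= z (cnode (val l)) ^+ 2) /\
  (forall e : {e : {set V} | e \in E},
      z (cedge e) = \prod_(i in val e) z (cnode i)) /\
  (forall i : V, 0 <= z (cnode i) <= 1).

Definition PP (R : realType) (V : finType) (E : {set {set V}})
  (Lm Lp : {set V}) : (hcoord E (Lm :|: Lp) -> R) -> Prop :=
  conv (@PPset R V E Lm Lp).

Definition lift_edge (V : finType) (E1 E2 : {set {set V}})
  (sub : E1 \subset E2) (e : {e : {set V} | e \in E1})
  : {e : {set V} | e \in E2} :=
  exist _ (val e) (subsetP sub _ (valP e)).

Definition projPP (R : realType) (V : finType) (E1 E2 : {set {set V}})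
  (L : {set V}) (sub : E1 \subset E2) (z : hcoord E2 L -> R)
  : hcoord E1 L -> R :=
  fun c => match c with
           | inl i => z (cnode i)
           | inr (inl e) => z (cedge (lift_edge sub e))
           | inr (inr l) => z (cloop l)
           end.
Arguments PP {R V} E Lm Lp.

(* Main.v *)
Require Import Defs.
From HB Require Import structures.
From mathcomp Require Import all_boot all_order all_algebra.
From mathcomp Require Import reals.
From Stdlib Require Import FunctionalExtensionality.
Import Order.TTheory GRing.Theory Num.Theory.
Local Open Scope ring_scope.

Definition extPP (R : realType) (V : finType) (E1 E2 : {set {set V}})
  (L : {set V}) (x : hcoord E1 L -> R) : hcoord E2 L -> R :=
  fun c => match c with
           | inl i => x (inl i)
           | inr (inl e) => \prod_(i in val e) x (inl i)
           | inr (inr l) => x (inr (inr l))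
           end.

Theorem lemma3 (R : realType) (V : finType) (E1 E2 : {set {set V}})
  (Lm Lp : {set V})
  (hE1 : hyperedges_ok E1) (hE2 : hyperedges_ok E2)
  (hL : [disjoint Lm & Lp]) (sub : E1 \subset E2) :
  forall z : hcoord E1 (Lm :|: Lp) -> R,
    PP E1 Lm Lp z <->
    exists z2 : hcoord E2 (Lm :|: Lp) -> R,
      PP E2 Lm Lp z2 /\ z = projPP sub z2.
Proof.
move=> z; split.
- move=> [n [lam [x [H0 [H1 [HS Hz]]]]]].
  pose x2 := fun k => @extPP R V E1 E2 (Lm :|: Lp) (x k).
  exists (fun c => \sum_(k < n) lam k * x2 k c); split.
    exists n, lam, x2; split=> //; split=> //; split=> //.
    move=> k; have [Hp [Hm [He Hn]]] := HS k.
    split; first by move=> l Hl; exact: Hp.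
    split; first by move=> l Hl; exact: Hm.
    by split.
  apply: functional_extensionality_dep => c.
  rewrite Hz; case: c => [i|[e|l]] //=.
  apply: eq_bigr => k _; congr (_ * _).
  have [_ [_ [He _]]] := HS k.
  by rewrite /x2 /= He.
- move=> [z2 [[n [lam [y [H0 [H1 [HS Hz]]]]]] ->]].
  exists n, lam, (fun k => projPP sub (y k)); split=> //; split=> //; split.
    move=> k; have [Hp [Hm [He Hn]]] := HS k.
    split; first by move=> l Hl; exact: Hp l Hl.
    split; first by move=> l Hl; exact: Hm l Hl.
    split; last by move=> i; exact: Hn.
    by move=> e; rewrite /= He.
  by case=> [i|[e|l]] /=; rewrite Hz.
Qed.
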